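(* Let $\omega_a,\omega_c,\kappa,\lambda>0$, $N>0$ and $K\in\mathbb{R}$. Consider, for $(Q,P,X,Y)$ in a neighbourhood of the origin with $X^2+Y^2<\tfrac14$, the system of ordinary differential equations \begin{align*} \dot Q&=\omega_c P-\kappa Q+KN\,P\,(Q^2+P^2),\\ \dot P&=-\omega_c Q-\kappa P-2\sqrt{2}\,\lambda X-KN\,Q\,(Q^2+P^2),\\ \dot X&=-\omega_a Y,\\ \dot Y&=\omega_a X-2\sqrt{2}\,\lambda\, Z\, Q,\qquad Z:=-\sqrt{\tfrac14-X^2-Y^2}. \end{align*} The origin $(Q,P,X,Y)=(0,0,0,0)$ is a fixed point. Let $J$ be the Jacobian matrix of the vector field at the origin. Then all eigenvalues of $J$ have strictly negative real part if and only if $$\frac{4\lambda^2}{\omega_a\omega_c}<1+\Big(\frac{\kappa}{\omega_c}\Big)^2 .$$ In particular, this condition does not depend on $K$.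
   Context: This is the mean-field dynamics of the dissipative quantum Rabi model with Kerr nonlinearity $H/\hbar=\omega_c a^\dagger a+\omega_a S_z+\frac{\lambda}{\sqrt N}(S_++S_-)(a+a^\dagger)+K(a^\dagger)^2a^2$ with cavity loss rate $\kappa$: $Q=\sqrt2\,\mathrm{Re}\,\alpha$, $P=\sqrt2\,\mathrm{Im}\,\alpha$ with $\alpha=\langle a\rangle/\sqrt N$, and $(X,Y,Z)=(\langle S_x\rangle,\langle S_y\rangle,\langle S_z\rangle)/N$ constrained to $X^2+Y^2+Z^2=\tfrac14$; the origin corresponds to the normal phase $Q=P=X=Y=0$, $Z=-\tfrac12$. *)

(* Defs.v *)
From HB Require Import structures.
From mathcomp Require Import all_boot all_order all_algebra.
From mathcomp Require Import all_classical all_reals.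
From mathcomp Require Import topology normedtype derive.
From mathcomp Require Import complex.
Set Implicit Arguments. Unset Strict Implicit. Unset Printing Implicit Defensive.
Import Order.TTheory GRing.Theory Num.Theory.
Local Open Scope ring_scope.

Definition coord4 {R : realType} (p : 'rV[R]_4) (k : nat) : R := p ord0 (inord k).

Definition Zof {R : realType} (p : 'rV[R]_4) : R :=
  - Num.sqrt (4^-1 - coord4 p 2 ^+ 2 - coord4 p 3 ^+ 2).

Definition rabi_field {R : realType} (wa wc kappa lambda N K : R)
    (p : 'rV[R]_4) : 'rV[R]_4 :=
  let Q := coord4 p 0 in let P := coord4 p 1 in
  let X := coord4 p 2 in let Y := coord4 p 3 in
  let Z := Zof p in
  \row_(i < 4) nth 0
    [:: wc * P - kappa * Q + K * N * P * (Q ^+ 2 + P ^+ 2);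
        - wc * Q - kappa * P - 2 * Num.sqrt 2 * lambda * X
          - K * N * Q * (Q ^+ 2 + P ^+ 2);
        - wa * Y;
        wa * X - 2 * Num.sqrt 2 * lambda * Z * Q] i.

(* Main.v *)
Require Import Defs.
From HB Require Import structures.
From mathcomp Require Import all_boot all_order all_algebra.
From mathcomp Require Import all_classical all_reals.
From mathcomp Require Import topology normedtype derive realfun.
From mathcomp Require Import complex ring lra polyrcf.
Import Order.TTheory GRing.Theory Num.Theory.
Import numFieldNormedType.Exports.
Local Open Scope ring_scope.
Set Implicit Arguments. Unset Strict Implicit.

Section D.
Variable R : realType.
Variables (V W : normedModType R).
Implicit Types (x : V).

Lemma dD (f g df dg : V -> W) x : is_diff x f df -> is_diff x g dg ->
  is_diff x (fun y => f y + g y) (fun y => df y + dg y).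
Proof. move=> H1 H2; exact: (is_diffD H1 H2). Qed.
Lemma dB (f g df dg : V -> W) x : is_diff x f df -> is_diff x g dg ->
  is_diff x (fun y => f y - g y) (fun y => df y - dg y).
Proof. move=> H1 H2; exact: (is_diffB H1 H2). Qed.
Lemma dN (f df : V -> W) x : is_diff x f df ->
  is_diff x (fun y => - f y) (fun y => - df y).
Proof. move=> H1; exact: (is_diffN H1). Qed.
Lemma dM (f g df dg : V -> R) x : is_diff x f df -> is_diff x g dg ->
  is_diff x (fun y => f y * g y) (fun y => f x * dg y + g x * df y).
Proof. move=> H1 H2; exact: (is_diffM H1 H2). Qed.
Lemma dK (f df : V -> R) (k : R) x : is_diff x f df ->
  is_diff x (fun y => k * f y) (fun y => k * df y).
Proof. move=> H1; exact: (is_diffZ k H1). Qed.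
Lemma dX2 (f df : V -> R) x : is_diff x f df ->
  is_diff x (fun y => f y ^+ 2) (fun y => 2 * f x * df y).
Proof.
move=> H1; rewrite (_ : (fun y => f y ^+ 2) = f ^+ 2); last by apply/funext => y; rewrite exprfctE.
apply: is_diff_eq (is_diffX 1 H1) _; apply/funext => y /=.
rewrite !fctE /GRing.scale /= expr1. by []. Qed.
Lemma dSc (f df : V -> R) (e : W) x : is_diff x f df ->
  is_diff x (fun y => f y *: e) (fun y => df y *: e).
Proof. move=> H1. exact: (is_diff_comp H1 (is_diff_scalel (f x) e)). Qed.
Lemma dcst (a : W) x : is_diff x (fun _ : V => a) (fun _ => 0).
Proof. exact: (is_diff_cst a x). Qed.
End D.

Section S.
Variable R : realType.

Lemma dcrd k (x : 'rV[R]_4) : is_diff x (fun y => coord4 y k) (fun y => coord4 y k).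
Proof.
have lin : linear (fun y : 'rV[R]_4 => coord4 y k) by move=> a u v; rewrite /coord4 !mxE.
pose lM := GRing.isLinear.Build _ _ _ _ _ lin.
pose L : {linear 'rV[R]_4 -> R} := HB.pack (fun y : 'rV[R]_4 => coord4 y k) lM.
have c : continuous L.
  move=> y; rewrite /= /coord4; exact: coord_continuous.
rewrite -[fun y => _]/(L : _ -> _).
apply: DiffDef; first exact: linear_differentiable.
exact: diff_lin.
Qed.

Lemma Zof0 : 4^-1 - coord4 (0 : 'rV[R]_4) 2 ^+ 2 - coord4 (0 : 'rV[R]_4) 3 ^+ 2 = 4^-1.
Proof. by rewrite /coord4 !mxE expr0n /= !subr0. Qed.

Lemma dZ : is_diff (0 : 'rV[R]_4) (fun y => Zof y) ('d Zof 0).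
Proof.
apply: DiffDef => //.
rewrite /Zof.
have [dg H] : exists dg, is_diff (0 : 'rV[R]_4) (fun y : 'rV[R]_4 => 4^-1 - coord4 y 2 ^+ 2 - coord4 y 3 ^+ 2) dg.
  eexists.
  repeat first [ apply: dD | apply: dB | apply: dN | apply: dX2 | apply: dM | apply: dcst | apply: dcrd ].
have Hd : differentiable (@Num.sqrt R) (4^-1 - coord4 (0 : 'rV[R]_4) 2 ^+ 2 - coord4 (0 : 'rV[R]_4) 3 ^+ 2).
  apply/derivable1_diffP; rewrite Zof0.
  apply: ex_derive; apply: is_derive1_sqrt; by rewrite invr_gt0.
have Hs := differentiableP Hd.
have H2 := dN (is_diff_comp H Hs).
exact: (@ex_diff _ _ _ _ _ _ _ H2).
Qed.


Definition ee (j : nat) : 'rV[R]_4 := delta_mx 0 (inord j).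

Ltac dstep2 := lazymatch goal with
| |- @is_diff_def _ _ _ _ _ (fun y => @GRing.add _ (@?f y) (@?g y)) _ => refine (dD (f:=f) (g:=g) _ _)
| |- @is_diff_def _ _ _ _ _ (fun y => @GRing.opp _ (@?f y)) _ => refine (dN (f:=f) _)
| |- @is_diff_def _ _ _ _ _ (fun y => @GRing.mul _ (@?f y) (@?g y)) _ => refine (dM (f:=f) (g:=g) _ _)
| |- @is_diff_def _ _ _ _ _ (fun y => @GRing.exp _ (@?f y) 2) _ => refine (dX2 (f:=f) _)
| |- @is_diff_def _ _ _ _ _ (fun y => @GRing.scale _ _ (@?f y) ?e) _ => refine (dSc (f:=f) e _)
| |- @is_diff_def _ _ _ _ _ (fun y => coord4 y ?k) _ => refine (dcrd k _)
| |- @is_diff_def _ _ _ _ _ (fun y => Zof y) _ => refine dZ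
| |- @is_diff_def _ _ _ _ _ (fun y => ?a) _ => refine (dcst a _)
end.


Definition F (wa wc kappa c N K : R) : 'rV[R]_4 -> 'rV[R]_4 := fun p =>
  (wc * coord4 p 1 - kappa * coord4 p 0 + K * N * coord4 p 1 * (coord4 p 0 ^+ 2 + coord4 p 1 ^+ 2)) *: ee 0 +
  (- wc * coord4 p 0 - kappa * coord4 p 1 - c * coord4 p 2
          - K * N * coord4 p 0 * (coord4 p 0 ^+ 2 + coord4 p 1 ^+ 2)) *: ee 1 +
  (- wa * coord4 p 3) *: ee 2 +
  (wa * coord4 p 2 - c * Zof p * coord4 p 0) *: ee 3.

Lemma rabiF wa wc kappa lambda N K : rabi_field wa wc kappa lambda N K = F wa wc kappa (2 * Num.sqrt 2 * lambda) N K.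
Proof.
apply/funext => p; apply/matrixP => i j.
rewrite /F /rabi_field /ee !mxE /=.
rewrite ord1; case: j => [[|[|[|[|j]]]] Hj] //=; rewrite -?val_eqE /= ?inordK //=; ring.
Qed.

Definition J0 (wa wc kappa c z0 : R) : 'M[R]_4 := \matrix_(i < 4, j < 4) nth 0 (nth [::]
  [:: [:: -kappa; -wc; 0; - c * z0];
      [:: wc; -kappa; 0; 0];
      [:: 0; -c; 0; wa];
      [:: 0; 0; -wa; 0]] i) j.

Lemma coord40 k : coord4 (0 : 'rV[R]_4) k = 0.
Proof. by rewrite /coord4 mxE. Qed.

Lemma coorde (i : 'I_4) k : coord4 (delta_mx 0 i : 'rV[R]_4) k = (i == inord k)%:R.
Proof. rewrite /coord4 mxE; have -> : (ord0 == 0 :> 'I_1) by []. by rewrite andTb eq_sym. Qed.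

Lemma jacF wa wc kappa c N K : jacobian (F wa wc kappa c N K) 0 = J0 wa wc kappa c (Zof 0).
Proof.
evar (dQ : 'rV[R]_4 -> R).
have HQ : is_diff (0 : 'rV[R]_4) (fun p : 'rV[R]_4 => wc * coord4 p 1 - kappa * coord4 p 0 + K * N * coord4 p 1 * (coord4 p 0 ^+ 2 + coord4 p 1 ^+ 2)) dQ.
  rewrite /dQ; repeat dstep2.
evar (dP : 'rV[R]_4 -> R).
have HP : is_diff (0 : 'rV[R]_4) (fun p : 'rV[R]_4 => - wc * coord4 p 0 - kappa * coord4 p 1 - c * coord4 p 2
          - K * N * coord4 p 0 * (coord4 p 0 ^+ 2 + coord4 p 1 ^+ 2)) dP.
  rewrite /dP; repeat dstep2.
evar (dX : 'rV[R]_4 -> R).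
have HX : is_diff (0 : 'rV[R]_4) (fun p : 'rV[R]_4 => - wa * coord4 p 3) dX.
  rewrite /dX; repeat dstep2.
evar (dY : 'rV[R]_4 -> R).
have HY : is_diff (0 : 'rV[R]_4) (fun p : 'rV[R]_4 => wa * coord4 p 2 - c * Zof p * coord4 p 0) dY.
  rewrite /dY; repeat dstep2.
have H := dD (dD (dD (dSc (ee 0) HQ) (dSc (ee 1) HP)) (dSc (ee 2) HX)) (dSc (ee 3) HY).
rewrite /jacobian (@diff_val _ _ _ _ _ _ _ H).
apply/matrixP => i j; rewrite !mxE /dQ /dP /dX /dY /= !coord40 !coorde.
case: i => [[|[|[|[|i]]]] Hi]; case: j => [[|[|[|[|j]]]] Hj] //=; rewrite -?val_eqE /= ?inordK //=.
all: ring.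
Qed.


Local Open Scope complex_scope.
Lemma eigJ0 (wa wc kappa c z0 : R) (v : 'rV[R[i]]_4) z : wa != 0 -> wc != 0 -> c != 0 ->
  v *m map_mx (fun x : R => (x%:C)%C) (J0 wa wc kappa c z0) = z *: v -> v != 0 ->
  ((z + kappa%:C)^+2 + (wc%:C)^+2) * (z^+2 + (wa%:C)^+2) = - (wa%:C * wc%:C * (c%:C)^+2 * z0%:C).
Proof.
move=> hwa hwc hc Hv vn0.
have E (j : 'I_4) := congr1 (fun m : 'M[R[i]]_(1,4) => m ord0 j) Hv.
have E0 := E ord0.
have E1 := E (lift ord0 ord0).
have E2 := E (lift ord0 (lift ord0 ord0)).
have E3 := E (lift ord0 (lift ord0 (lift ord0 ord0))).
move: E0 E1 E2 E3; rewrite /= !mxE !big_ord_recl !big_ord0 !mxE /= ?rmorphN ?rmorph0 ?rmorphM.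
set q := v ord0 ord0.
set p := v ord0 (lift ord0 ord0).
set x := v ord0 (lift ord0 (lift ord0 ord0)).
set y := v ord0 (lift ord0 (lift ord0 (lift ord0 ord0))).
move=> /eqP; rewrite eq_sym -subr_eq0; set L0 := (_ - _) => /eqP E0.
move=> /eqP; rewrite eq_sym -subr_eq0; set L1 := (_ - _) => /eqP E1.
move=> /eqP; rewrite eq_sym -subr_eq0; set L2 := (_ - _) => /eqP E2.
move=> /eqP; rewrite eq_sym -subr_eq0; set L3 := (_ - _) => /eqP E3.
set A := (z + kappa%:C)^+2 + (wc%:C)^+2.
set B := z^+2 + (wa%:C)^+2.
set W := wa%:C * wc%:C * (c%:C)^+2 * z0%:C.
have key : (A * B + W) * q = 0.
  have -> : (A * B + W) * q = B * ((z + kappa%:C) * L0 + wc%:C * L1) - wc%:C * c%:C * (z * L2 - wa%:C * L3).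
    rewrite /A /B /W /L0 /L1 /L2 /L3; ring.
  by rewrite E0 E1 E2 E3; ring.
have hq : q != 0.
  apply: contraNneq vn0 => hq.
  have hwcC : wc%:C != 0 by rewrite fmorph_eq0.
  have hcC : c%:C != 0 by rewrite fmorph_eq0.
  have hwaC : wa%:C != 0 by rewrite fmorph_eq0.
  have hp : p = 0.
    have : p * wc%:C = - L0 by rewrite /L0 hq; ring.
    by rewrite E0 oppr0 => /eqP; rewrite mulf_eq0 (negbTE hwcC) orbF => /eqP.
  have hx : x = 0.
    have : x * c%:C = L1 by rewrite /L1 hq hp; ring.
    by rewrite E1 => /eqP; rewrite mulf_eq0 (negbTE hcC) orbF => /eqP.
  have hy : y = 0.
    have : y * wa%:C = L2 by rewrite /L2 hx; ring.
    by rewrite E2 => /eqP; rewrite mulf_eq0 (negbTE hwaC) orbF => /eqP.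
  apply/eqP/rowP => j; rewrite mxE.
  case: j => [[|[|[|[|j]]]] Hj] //.
  - by rewrite -hq /q; congr (v _ _); apply: val_inj.
  - by rewrite -hp /p; congr (v _ _); apply: val_inj.
  - by rewrite -hx /x; congr (v _ _); apply: val_inj.
  - by rewrite -hy /y; congr (v _ _); apply: val_inj.
apply/eqP; rewrite -subr_eq0 opprK; apply/eqP.
by move/eqP: key; rewrite mulf_eq0 (negbTE hq) orbF => /eqP.
Qed.

Lemma eqR (a b : R) : a = b -> a = b. Proof. by []. Qed.
Lemma eigbuild (wa wc kappa c z0 t : R) : wa != 0 -> wc != 0 -> c != 0 ->
  ((t + kappa)^+2 + wc^+2) * (t^+2 + wa^+2) = - (wa * wc * c^+2 * z0) ->
  eigenvalue (map_mx (fun x : R => (x%:C)%C) (J0 wa wc kappa c z0)) t%:C.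
Proof.
move=> hwa hwc hc ht.
set p := (t + kappa) / wc.
set x := - (((t + kappa)^+2 + wc^+2) / (wc * c)).
set y := - (t * x / wa).
apply/eigenvalueP; exists (\row_(j < 4) (nth 0 [:: 1; p; x; y] j)%:C).
  apply/rowP => j; rewrite !mxE !big_ord_recl !big_ord0 !mxE /=.
  rewrite addr0 -!rmorphM -!rmorphD.
  case: j => [[|[|[|[|j]]]] Hj] //=; congr (_%:C).
  - rewrite /p; apply: eqR; field. by [].
  - rewrite /p /x; apply: eqR; field. by apply/andP.
  - rewrite /y /x; apply: eqR; field. by rewrite hc hwc hwa.
  - have hz : z0 = - (((t + kappa)^+2 + wc^+2) * (t^+2 + wa^+2)) / (wa * wc * c^+2).
      rewrite ht; apply: eqR; field. by rewrite hc hwc hwa.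
    rewrite /y /x hz; apply: eqR; field. by rewrite hc hwc hwa.
apply/eqP => /rowP /(_ ord0); rewrite !mxE /=.
move/eqP; rewrite fmorph_eq0 => /eqP; apply/eqP; exact: oner_neq0.
Qed.
End S.

Lemma key (R : realType) (a b k wa wc M Ar Ai Br Bi : R) : 0 < k -> 0 < M -> M < (k^+2+wc^+2)*wa^+2 -> 0 <= a ->
  Ar = (a+k)^+2 - b^+2 + wc^+2 -> Ai = 2*(a+k)*b -> Br = a^+2-b^+2+wa^+2 -> Bi = 2*a*b ->
  Ar*Br - Ai*Bi = M -> Ar*Bi + Ai*Br = 0 -> False.
Proof.
move=> k0 M0 hM a0 eAr eAi eBr eBi e1 e2.
have id1 : Ai * (Br^+2 + Bi^+2) = - M * Bi.
  rewrite -e1; have : Ai * Br = - (Ar * Bi) by nra.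
  move=> h; rewrite [LHS](_ : _ = (Ai * Br) * Br + Ai * Bi^+2); last by ring.
  rewrite h; ring.
have hb : b * ((a + k) * (Br^+2 + Bi^+2) + M * a) = 0.
  have : 2 * (b * ((a + k) * (Br^+2 + Bi^+2) + M * a)) = 0.
    have -> : 2 * (b * ((a + k) * (Br^+2 + Bi^+2) + M * a)) = Ai * (Br^+2 + Bi^+2) + M * Bi by rewrite eAi eBi; ring.
    by rewrite id1; ring.
  by move/eqP; rewrite mulf_eq0 pnatr_eq0 /= => /eqP.
move/eqP: hb; rewrite mulf_eq0 => /orP [/eqP b0|/eqP h].
  move: e1; rewrite eAr eAi eBr eBi b0 => e1.
  have : (k^+2 + wc^+2) * wa^+2 <= M.
    rewrite -e1. nra.
  lra.
have hB : Br^+2 + Bi^+2 = 0.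
  have p1 : 0 <= Br^+2 + Bi^+2 by nra.
  have p2 : 0 <= M * a by nra.
  nra.
have hBr : Br = 0 by nra.
have hBi : Bi = 0 by nra.
move: e1; rewrite hBr hBi => e1. lra.
Qed.

Lemma exroot (R : realType) (k wa wc M : R) : 0 < k -> 0 < wa -> 0 < wc -> (k^+2+wc^+2)*wa^+2 <= M ->
  exists t, 0 <= t /\ ((t+k)^+2+wc^+2)*(t^+2+wa^+2) = M.
Proof.
move=> k0 wa0 wc0 hM.
pose p : {poly R} := (('X + k%:P)^+2 + (wc^+2)%:P) * ('X ^+ 2 + (wa^+2)%:P) - M%:P.
have pE t : p.[t] = ((t+k)^+2+wc^+2)*(t^+2+wa^+2) - M by rewrite /p !hornerE.
have M0 : 0 < M by apply: lt_le_trans hM; apply: mulr_gt0; [apply: addr_gt0; apply: exprn_gt0|apply: exprn_gt0].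
have h0 : 0 <= 1 + M by lra.
have [|t] := @poly_ivt R p 0 (1 + M) h0.
  rewrite !pE; set b := 1 + M.
  have hb : M <= ((b + k) ^+ 2 + wc ^+ 2) * (b ^+ 2 + wa ^+ 2).
    have b1 : 1 <= b by rewrite /b; lra.
    have e1 : b ^+ 2 <= (b + k) ^+ 2 + wc ^+ 2 by nra.
    have e2 : b ^+ 2 <= b ^+ 2 + wa ^+ 2 by nra.
    have e3a : b <= b^+2 by rewrite expr2; nra.
    have e3b : 1 <= b^+2 by lra.
    have e3 : b <= b^+2 * b^+2 by nra.
    have e4 : b^+2 * b^+2 <= ((b + k) ^+ 2 + wc ^+ 2) * (b ^+ 2 + wa ^+ 2).
      apply: ler_pM => //; nra.
    rewrite /b in e3 e4 *; lra.
  have : ((0 + k) ^+ 2 + wc ^+ 2) * (0 ^+ 2 + wa ^+ 2) - M <= 0 by rewrite add0r expr0n /= add0r; lra.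
  move=> h1; have h2 : 0 <= ((b + k) ^+ 2 + wc ^+ 2) * (b ^+ 2 + wa ^+ 2) - M by lra.
  nra.
move=> /[swap] /rootP; rewrite pE => /eqP; rewrite subr_eq0 => /eqP ht.
by move=> /andP [t0 _]; exists t.
Qed.

Local Open Scope complex_scope.
Section C.
Variable R : realType.
Lemma cadd (a b c d : R) : (a +i* b) + (c +i* d) = (a + c) +i* (b + d). Proof. by []. Qed.
Lemma cmul (a b c d : R) : (a +i* b) * (c +i* d) = (a * c - b * d) +i* (a * d + b * c). Proof. by []. Qed.
Lemma crc (a : R) : a%:C = a +i* 0. Proof. by []. Qed.

Lemma copp (a b : R) : - (a +i* b) = (- a) +i* (- b). Proof. by []. Qed.
Lemma rcE (x y z w : R) : - (x%:C * y%:C * (z%:C)^+2 * w%:C) = (- (x*y*z^+2*w))%:C :> R[i].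
Proof. rewrite !crc expr2 !cmul copp; congr (_ +i* _); ring. Qed.

Lemma reP (kappa wa wc M : R) (z : R[i]) : 0 < kappa -> 0 < M -> M < (kappa^+2+wc^+2)*wa^+2 ->
  ((z + kappa%:C)^+2 + (wc%:C)^+2) * (z^+2 + (wa%:C)^+2) = M%:C -> complex.Re z < 0.
Proof.
case: z => a b k0 M0 hM /=.
rewrite !expr2 !crc !(cadd, cmul) => -[e1 e2].
rewrite ltNge; apply/negP => a0.
apply: (@key R a b kappa wa wc M _ _ _ _ k0 M0 hM a0 erefl erefl erefl erefl).
  by rewrite -e1; ring.
by rewrite -e2; ring.
Qed.
End C.


Local Close Scope complex_scope.
Unset Implicit Arguments.
Theorem mainTheorem1 (R : realType) (wa wc kappa lambda N K : R) :
  0 < wa -> 0 < wc -> 0 < kappa -> 0 < lambda -> 0 < N ->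
  rabi_field wa wc kappa lambda N K 0 = 0 /\
  ((forall z : R[i],
      eigenvalue (map_mx (fun x : R => (x%:C)%C)
                   (jacobian (rabi_field wa wc kappa lambda N K) 0)) z ->
      complex.Re z < 0)
   <-> 4 * lambda ^+ 2 / (wa * wc) < 1 + (kappa / wc) ^+ 2).
Proof.
move=> wa0 wc0 k0 l0 N0.
have s2 : Num.sqrt 2 ^+ 2 = 2 :> R by rewrite sqr_sqrtr // ler0n.
have Z0 : Zof (0 : 'rV[R]_4) = - 2^-1.
  rewrite /Zof Zof0.
  have -> : 4^-1 = (2^-1)^+2 :> R by field.
  by rewrite sqrtr_sqr ger0_norm // invr_ge0 ler0n.
rewrite rabiF.
set c := 2 * Num.sqrt 2 * lambda.
have c0 : 0 < c by rewrite /c !mulr_gt0 // sqrtr_gt0 ltr0n.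
have c2 : c ^+ 2 = 8 * lambda ^+ 2 by rewrite /c !exprMn s2; ring.
have hwa : wa != 0 by rewrite gt_eqF.
have hwc : wc != 0 by rewrite gt_eqF.
have hc : c != 0 by rewrite gt_eqF.
split.
  apply/rowP => j; rewrite /F !coord40 !mxE; ring.
rewrite jacF.
set M := - (wa * wc * c ^+ 2 * Zof 0).
have ME : M = 4 * wa * wc * lambda ^+ 2 by rewrite /M Z0 c2; field.
have M0 : 0 < M by rewrite ME !mulr_gt0 // exprn_gt0.
have condE : 4 * lambda ^+ 2 / (wa * wc) < 1 + (kappa / wc) ^+ 2 <-> M < (kappa^+2 + wc^+2) * wa^+2.
  have hD : (kappa^+2 + wc^+2) * wa^+2 - M = (wa * wc)^+2 * ((1 + (kappa / wc) ^+ 2) - 4 * lambda ^+ 2 / (wa * wc)).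
    by rewrite ME; field; rewrite hwc hwa.
  have p : 0 < (wa * wc)^+2 by rewrite exprn_gt0 // mulr_gt0.
  rewrite -subr_gt0 -[M < _]subr_gt0 hD pmulr_rgt0 //.
split.
- move=> H; apply/condE; rewrite ltNge; apply/negP => hle.
  have [t [t0 ht]] := exroot k0 wa0 wc0 hle.
  have := H t%:C%C (eigbuild hwa hwc hc ht).
  rewrite /=; lra.
- move=> /condE hc' z /eigenvalueP [v Hv vn0].
  have hz := eigJ0 hwa hwc hc Hv vn0.
  apply: (reP k0 M0 hc'); rewrite hz /M.
  exact: rcE.
Qed.
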